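(* Let $A$ be an abelian group, $I$ a finite set, and $(A_i)_{i\in I}$ a family of subgroups of $A$ such that the lattice of subgroups of $A$ generated by the $A_i$ (under the operations $+$ and $\cap$) is distributive. Let $n$ be a positive integer and $(a(i_0,\dots,i_n))_{i_0,\dots,i_n\in I}$ a family of elements of $A$ such that $$\sum_{j=0}^{n+1}(-1)^j\,a(i_0,\dots,\widehat{i_j},\dots,i_{n+1})\equiv 0\pmod{A_{i_0}+\cdots+A_{i_{n+1}}}\quad\text{for all } i_0,\dots,i_{n+1}\in I.$$ Then there exists a family $(x(i_0,\dots,i_{n-1}))_{i_0,\dots,i_{n-1}\in I}$ of elements of $A$ such that $$\sum_{j=0}^{n}(-1)^j\,x(i_0,\dots,\widehat{i_j},\dots,i_n)\equiv a(i_0,\dots,i_n)\pmod{A_{i_0}+\cdots+A_{i_n}}\quad\text{for all } i_0,\dots,i_n\in I.$$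
   Context: A congruence $u\equiv v \pmod{B}$ for a subgroup $B$ of $A$ means $u-v\in B$. A hat $\widehat{i_j}$ means that the entry $i_j$ is omitted. A lattice is distributive if one (equivalently, each) of its two operations distributes over the other. *)

(* Defs.v *)
From mathcomp Require Import all_boot all_order all_algebra.
Set Implicit Arguments. Unset Strict Implicit. Unset Printing Implicit Defensive.
Import GRing.Theory.
Local Open Scope ring_scope.

Definition is_subgroup (A : zmodType) (S : A -> Prop) : Prop :=
  S 0 /\ forall x y, S x -> S y -> S (x - y).

Definition sumset (A : zmodType) (X Y : A -> Prop) : A -> Prop :=
  fun z => exists x y, X x /\ Y y /\ z = x + y.
Definition capset (A : zmodType) (X Y : A -> Prop) : A -> Prop :=
  fun z => X z /\ Y z.

Inductive gen_lattice (A : zmodType) (I : Type) (S : I -> A -> Prop)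
  : (A -> Prop) -> Prop :=
| gl_base i : gen_lattice S (S i)
| gl_sum X Y : gen_lattice S X -> gen_lattice S Y -> gen_lattice S (sumset X Y)
| gl_cap X Y : gen_lattice S X -> gen_lattice S Y -> gen_lattice S (capset X Y).

Definition distributive_gen (A : zmodType) (I : Type) (S : I -> A -> Prop) : Prop :=
  forall X Y Z, gen_lattice S X -> gen_lattice S Y -> gen_lattice S Z ->
    forall z, capset X (sumset Y Z) z <-> sumset (capset X Y) (capset X Z) z.

Definition subsum (A : zmodType) (I : Type) (S : I -> A -> Prop) (m : nat)
  (i : 'I_m -> I) : A -> Prop :=
  fun y => exists f : 'I_m -> A, (forall k, S (i k) (f k)) /\ y = \sum_(k < m) f k.

Definition face (I : finType) (m : nat) (j : 'I_m.+1) (i : {ffun 'I_m.+1 -> I})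
  : {ffun 'I_m -> I} := [ffun k => i (lift j k)].

Definition coboundary (A : zmodType) (I : finType) (m : nat)
  (a : {ffun 'I_m -> I} -> A) (i : {ffun 'I_m.+1 -> I}) : A :=
  \sum_(j < m.+1) a (face j i) *~ ((-1) ^+ j).

(* Main.v *)
Require Import Defs.
From mathcomp Require Import all_boot all_order all_algebra.
From Stdlib Require Import ClassicalEpsilon.
Set Implicit Arguments. Unset Strict Implicit. Unset Printing Implicit Defensive.
Import GRing.Theory.
Local Open Scope ring_scope.

From mathcomp Require Import all_boot all_order all_algebra.
Set Implicit Arguments. Unset Strict Implicit. Unset Printing Implicit Defensive.
Import GRing.Theory.
Local Open Scope ring_scope.

Section Basics.
Variable A : zmodType.

Lemma sg_opp (P : A -> Prop) : is_subgroup P -> forall x, P x -> P (- x).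
Proof. by move=> [H0 HB] x Hx; rewrite -sub0r; apply: HB. Qed.

Lemma sg_add (P : A -> Prop) : is_subgroup P -> forall x y, P x -> P y -> P (x + y).
Proof.
move=> HP x y Hx Hy; rewrite -[y]opprK; apply: HP.2 => //; exact: sg_opp.
Qed.

Lemma sg_sub (P : A -> Prop) : is_subgroup P -> forall x y, P x -> P y -> P (x - y).
Proof. by move=> HP; apply: HP.2. Qed.

Lemma sg_muln (P : A -> Prop) : is_subgroup P -> forall x n, P x -> P (x *+ n).
Proof.
move=> HP x n Hx; elim: n => [|n IH]; first by rewrite mulr0n; exact: HP.1.
by rewrite mulrS; apply: sg_add.
Qed.

Lemma sg_mulz (P : A -> Prop) : is_subgroup P -> forall x z, P x -> P (x *~ z).
Proof.
move=> HP x [n|n] Hx; first by rewrite -pmulrn; apply: sg_muln.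
by rewrite NegzE mulrNz -pmulrn; apply: sg_opp => //; apply: sg_muln.
Qed.

Lemma sg_sum (P : A -> Prop) : is_subgroup P -> forall m (F : 'I_m -> A),
  (forall k, P (F k)) -> P (\sum_(k < m) F k).
Proof.
move=> HP m F HF; apply: (big_ind P) => //; first exact: HP.1.
by move=> x y; apply: sg_add.
Qed.
End Basics.

Section Tuples.
Variables (A : zmodType) (I : finType).

Definition consf (m : nat) (p : I) (i : {ffun 'I_m -> I}) : {ffun 'I_m.+1 -> I} :=
  [ffun k => if unlift ord0 k is Some k' then i k' else p].

Lemma consf0 m p (i : {ffun 'I_m -> I}) : consf p i ord0 = p.
Proof. by rewrite ffunE unlift_none. Qed.

Lemma consf_lift m p (i : {ffun 'I_m -> I}) k : consf p i (lift ord0 k) = i k.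
Proof. by rewrite ffunE liftK. Qed.

Lemma face0_consf m p (i : {ffun 'I_m -> I}) : face ord0 (consf p i) = i.
Proof. by apply/ffunP => k; rewrite ffunE consf_lift. Qed.

Lemma consf_face0 m (i : {ffun 'I_m.+1 -> I}) : consf (i ord0) (face ord0 i) = i.
Proof.
apply/ffunP => k; rewrite ffunE; case: unliftP => [k'|] ->; last by [].
by rewrite ffunE.
Qed.

Lemma face_lift_consf m p (i : {ffun 'I_m.+1 -> I}) (j : 'I_m.+1) :
  face (lift ord0 j) (consf p i) = consf p (face j i).
Proof.
apply/ffunP => k; rewrite [in LHS]ffunE [in RHS]ffunE.
case: (unliftP ord0 k) => [k'|] ->.
- have -> : lift (lift ord0 j) (lift ord0 k') = lift ord0 (lift j k').
    by apply: val_inj; rewrite /= /bump !add1n ltnS /=; case: leqP.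
  by rewrite consf_lift ffunE.
- by rewrite (_ : lift (lift ord0 j) (@ord0 m) = ord0) ?consf0 //; apply: val_inj.
Qed.

Lemma coboundary_ext m (a b : {ffun 'I_m -> I} -> A) (i : {ffun 'I_m.+1 -> I}) :
  (forall u, a u = b u) -> coboundary a i = coboundary b i.
Proof. by move=> H; apply: eq_bigr => j _; rewrite H. Qed.

Lemma coboundaryB m (a b : {ffun 'I_m -> I} -> A) (i : {ffun 'I_m.+1 -> I}) :
  coboundary (fun u => a u - b u) i = coboundary a i - coboundary b i.
Proof. by rewrite /coboundary -sumrB; apply: eq_bigr => j _; rewrite mulrzBl. Qed.

Lemma coboundaryD m (a b : {ffun 'I_m -> I} -> A) (i : {ffun 'I_m.+1 -> I}) :
  coboundary (fun u => a u + b u) i = coboundary a i + coboundary b i.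
Proof. by rewrite /coboundary -big_split; apply: eq_bigr => j _; rewrite mulrzDl. Qed.

Lemma coboundary_consf m (a : {ffun 'I_m.+1 -> I} -> A) p (i : {ffun 'I_m.+1 -> I}) :
  coboundary a (consf p i) = a i - coboundary (fun u => a (consf p u)) i.
Proof.
rewrite /coboundary big_ord_recl /= expr0 mulr1z face0_consf -sumrN.
congr (_ + _); apply: eq_bigr => j _.
by rewrite face_lift_consf /bump add1n exprS mulN1r mulrNz.
Qed.

Lemma dd0 m (x : {ffun 'I_m -> I} -> A) (i : {ffun 'I_m.+2 -> I}) :
  coboundary (coboundary x) i = 0.
Proof.
elim: m x i => [|m IH] x i.
  have E : forall u v : {ffun 'I_0 -> I}, u = v.
    by move=> u v; apply/ffunP => -[].
  rewrite /coboundary !big_ord_recl !big_ord0 /= !addr0 expr0 expr1 !mulr1z.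
  by rewrite (E (face ord0 (face (lift ord0 ord0) i)) (face ord0 (face ord0 i)))
    mulrN1z subrr.
rewrite -(consf_face0 i).
set p := i ord0; set i' := face ord0 i.
rewrite (coboundary_consf (coboundary x) p i').
rewrite (coboundary_ext (a := fun u => coboundary x (consf p u)) (b := fun u => x u - coboundary (fun v => x (consf p v)) u));
  last by move=> u /=; rewrite coboundary_consf.
by rewrite coboundaryB IH subr0 subrr.
Qed.
End Tuples.

Section Subsum.
Variables (A : zmodType) (I : finType) (S : I -> A -> Prop).
Hypothesis HS : forall i, is_subgroup (S i).

Lemma subsum_sg m (i : 'I_m -> I) : is_subgroup (subsum S i).
Proof.
split.
  by exists (fun _ => 0); split; [move=> k; exact: (HS _).1 | rewrite big1].
move=> x y [f [Hf ->]] [g [Hg ->]]; exists (fun k => f k - g k); split.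
  by move=> k; apply: sg_sub.
by rewrite sumrB.
Qed.

Lemma subsum_mem m (i : 'I_m -> I) k y : S (i k) y -> subsum S i y.
Proof.
move=> Hy; exists (fun k' => if k' == k then y else 0); split.
  by move=> k'; case: eqP => [->|_] //; exact: (HS _).1.
by rewrite (bigD1 k) //= eqxx big1 ?addr0 // => k' /negbTE ->.
Qed.

Lemma subsum_face m (j : 'I_m.+1) (i : {ffun 'I_m.+1 -> I}) y :
  subsum S (face j i) y -> subsum S i y.
Proof.
move=> [f [Hf ->]].
exists (fun k => if unlift j k is Some k' then f k' else 0); split.
  move=> k; case: unliftP => [k' ->|->]; last exact: (HS _).1.
  by have := Hf k'; rewrite ffunE.
rewrite (bigD1_ord j) //= unlift_none add0r.
by apply: eq_bigr => k _; rewrite liftK.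
Qed.

Lemma subsum_cob m (b : {ffun 'I_m -> I} -> A) (i : {ffun 'I_m.+1 -> I}) :
  (forall j, subsum S (face j i) (b (face j i))) -> subsum S i (coboundary b i).
Proof.
move=> H; apply: sg_sum; first exact: subsum_sg.
move=> j; apply: sg_mulz; first exact: subsum_sg.
exact: subsum_face (H j).
Qed.

Lemma subsum_uncons m (i : {ffun 'I_m.+1 -> I}) y : subsum S i y ->
  exists u v, S (i ord0) u /\ subsum S (face ord0 i) v /\ y = u + v.
Proof.
move=> [f [Hf ->]]; exists (f ord0), (\sum_(k < m) f (lift ord0 k)).
split; first exact: Hf.
split; last by rewrite big_ord_recl.
exists (fun k => f (lift ord0 k)); split => // k; rewrite ffunE; exact: Hf.
Qed.

Lemma subsum_cons m (i : {ffun 'I_m.+1 -> I}) u v :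
  S (i ord0) u -> subsum S (face ord0 i) v -> subsum S i (u + v).
Proof.
move=> Hu [f [Hf ->]].
exists (fun k => if unlift ord0 k is Some k' then f k' else u); split.
  move=> k; case: unliftP => [k' ->|->] //.
  by have := Hf k'; rewrite ffunE.
by rewrite big_ord_recl unlift_none; congr (_ + _); apply: eq_bigr => k _; rewrite liftK.
Qed.

Lemma subsum_nil (i : {ffun 'I_0 -> I}) y : subsum S i y -> y = 0.
Proof. by move=> [f [_ ->]]; rewrite big_ord0. Qed.

Lemma subsum_nil0 (i : {ffun 'I_0 -> I}) : subsum S i 0.
Proof. exact: (subsum_sg i).1. Qed.

End Subsum.

Lemma subsum_mono (A : zmodType) (I : finType) (S1 S2 : I -> A -> Prop) m (i : 'I_m -> I) y :
  (forall k x, S1 k x -> S2 k x) -> subsum S1 i y -> subsum S2 i y.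
Proof. by move=> H [f [Hf ->]]; exists f; split => // k; apply: H. Qed.

Section Lattice.
Variables (A : zmodType) (I : finType) (S : I -> A -> Prop).
Hypothesis HS : forall i, is_subgroup (S i).
Hypothesis Hdist : distributive_gen S.

Lemma subsum_lat m (i : {ffun 'I_m.+1 -> I}) :
  exists Z, gen_lattice S Z /\ forall y, subsum S i y <-> Z y.
Proof.
elim: m i => [|m IH] i.
  exists (S (i ord0)); split; first exact: gl_base.
  move=> y; split.
    move=> /(subsum_uncons) [u [v [Hu [Hv ->]]]].
    by rewrite (subsum_nil Hv) addr0.
  by move=> Hy; rewrite -[y]addr0; apply: subsum_cons => //; exact: subsum_nil0.
have [Z [HZ HZe]] := IH (face ord0 i).
exists (sumset (S (i ord0)) Z); split; first by apply: gl_sum => //; exact: gl_base.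
move=> y; split.
  move=> /(subsum_uncons) [u [v [Hu [Hv ->]]]].
  by exists u, v; split => //; split => //; apply/HZe.
move=> [u [v [Hu [Hv ->]]]]; apply: subsum_cons => //; exact/HZe.
Qed.

Lemma subsum_cap p m (i : {ffun 'I_m.+1 -> I}) y :
  S p y -> subsum S i y -> subsum (fun k => capset (S p) (S k)) i y.
Proof.
have HS' : forall k, is_subgroup (capset (S p) (S k)).
  move=> k; split; first by split; [exact: (HS p).1 | exact: (HS k).1].
  by move=> x z [? ?] [? ?]; split; apply: sg_sub.
elim: m i y => [|m IH] i y Hp.
  move=> /(subsum_uncons) [u [v [Hu [Hv E]]]].
  move: Hp; rewrite E (subsum_nil Hv) addr0 => Hp.
  rewrite -[u]addr0; apply: subsum_cons => //; exact: subsum_nil0.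
move=> Hy.
have [Z [HZ HZe]] := subsum_lat (face ord0 i).
have Hy' : capset (S p) (sumset (S (i ord0)) Z) y.
  split => //; move: Hy => /(subsum_uncons) [u [v [Hu [Hv ->]]]].
  by exists u, v; split => //; split => //; apply/HZe.
have := (Hdist (gl_base S p) (gl_base S (i ord0)) HZ y).1 Hy'.
move=> [u [v [Hu [[Hvp HvZ] ->]]]].
apply: subsum_cons => //; apply: IH => //; exact/HZe.
Qed.
End Lattice.

Lemma gen_lattice_cap (A : zmodType) (I : finType) (S : I -> A -> Prop) p X :
  gen_lattice (fun k => capset (S p) (S k)) X -> gen_lattice S X.
Proof.
elim => [k|X' Y _ HX _ HY|X' Y _ HX _ HY].
- exact: (gl_cap (gl_base S p) (gl_base S k)).
- exact: gl_sum.
- exact: gl_cap.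
Qed.

Lemma dist_cap (A : zmodType) (I : finType) (S : I -> A -> Prop) p :
  distributive_gen S -> distributive_gen (fun k => capset (S p) (S k)).
Proof.
rewrite /distributive_gen => H X Y Z HX HY HZ; exact: (H X Y Z (gen_lattice_cap HX) (gen_lattice_cap HY) (gen_lattice_cap HZ)).
Qed.

Lemma face_in (I : finType) (T : {set I}) m (j : 'I_m.+1) (i : {ffun 'I_m.+1 -> I}) :
  (forall k, i k \in T) -> forall k, face j i k \in T.
Proof. by move=> H k; rewrite ffunE. Qed.

Lemma consf_in (I : finType) (T : {set I}) m p (i : {ffun 'I_m -> I}) :
  p \in T -> (forall k, i k \in T) -> forall k, consf p i k \in T.
Proof. by move=> Hp H k; rewrite ffunE; case: unlift. Qed.

Lemma sum_in_sg (A : zmodType) (I : finType) (P : A -> Prop) m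
  (b : {ffun 'I_m -> I} -> A) (i : {ffun 'I_m.+1 -> I}) :
  is_subgroup P -> (forall u, P (b u)) -> P (coboundary b i).
Proof.
move=> HP Hb; apply: sg_sum => // j; exact: sg_mulz.
Qed.

Lemma l1 (A : zmodType) (X Y Z W : A) : X + Y - Z = (Y - W) - (Z - X - W).
Proof. by rewrite !opprB addrA subrK addrA (addrC X Y). Qed.
Lemma l2 (A : zmodType) (X Y Z : A) : X + Y - Z = Y - (Z - X).
Proof. by rewrite opprB addrA (addrC X Y). Qed.

Lemma main_lemma (A : zmodType) (I : finType) (N : nat) :
  forall (T : {set I}), (#|T| <= N)%N ->
  forall (S : I -> A -> Prop) (B : A -> Prop), is_subgroup B ->
  (forall i, is_subgroup (S i)) -> distributive_gen S ->
  (forall k x, k \in T -> S k x -> B x) ->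
  forall n (a : {ffun 'I_n.+1 -> I} -> A), (forall i, B (a i)) ->
  (forall i : {ffun 'I_n.+2 -> I}, (forall k, i k \in T) -> subsum S i (coboundary a i)) ->
  exists x : {ffun 'I_n -> I} -> A, (forall u, B (x u)) /\
    forall i : {ffun 'I_n.+1 -> I}, (forall k, i k \in T) -> subsum S i (coboundary x i - a i).
Proof.
elim: N => [|N IHN] T HT S B HB HS Hdist HTB n a HaB Ha.
  exists (fun _ => 0); split; first by move=> _; exact: HB.1.
  move=> i Hi; have := Hi ord0.
  by move: HT; rewrite leqn0 => /eqP/cards0_eq ->; rewrite in_set0.
have [T0|[p Hp]] := set_0Vmem T.
  exists (fun _ => 0); split; first by move=> _; exact: HB.1.
  by move=> i Hi; have := Hi ord0; rewrite T0 in_set0.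
set T' := T :\ p.
have HT' : (#|T'| <= N)%N.
  by move: HT; rewrite (cardsD1 p T) Hp add1n ltnS.
set x0 := fun u : {ffun 'I_n -> I} => a (consf p u).
have Hc : forall i : {ffun 'I_n.+1 -> I}, exists c, S p c /\
    ([forall k, i k \in T] -> subsum S i (coboundary a (consf p i) - c)).
  move=> i; case: (boolP [forall k, i k \in T]) => Hi; last first.
    by exists 0; split => //; exact: (HS p).1.
  have := Ha (consf p i) (consf_in Hp (fun k => forallP Hi k)).
  move=> /(subsum_uncons) [u [v [Hu [Hv E]]]].
  exists u; split; first by rewrite consf0 in Hu.
  by move=> _; rewrite E addrC addKr; rewrite face0_consf in Hv.
pose c i := proj1_sig (constructive_indefinite_description _ (Hc i)).
have HcS : forall i, S p (c i).
  by move=> i; exact: (proj2_sig (constructive_indefinite_description _ (Hc i))).1.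
have Hcr : forall i : {ffun 'I_n.+1 -> I}, (forall k, i k \in T) ->
    subsum S i (coboundary a (consf p i) - c i).
  move=> i Hi; apply: (proj2_sig (constructive_indefinite_description _ (Hc i))).2.
  exact/forallP.
pose r u := a u - coboundary x0 u - c u.
have Hr : forall u : {ffun 'I_n.+1 -> I}, (forall k, u k \in T) -> subsum S u (r u).
  by move=> u Hu; rewrite /r -coboundary_consf; exact: Hcr.
set S' := fun k => capset (S p) (S k).
have HS' : forall k, is_subgroup (S' k).
  move=> k; split; first by split; [exact: (HS p).1 | exact: (HS k).1].
  by move=> x z [? ?] [? ?]; split; apply: sg_sub.
have Hcoc : forall i' : {ffun 'I_n.+2 -> I}, (forall k, i' k \in T') ->
    subsum S' i' (coboundary c i').
  move=> i' Hi'.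
  have HiT : forall k, i' k \in T.
    by move=> k; have := Hi' k; rewrite in_setD1 => /andP[].
  apply: subsum_cap => //; first exact: sum_in_sg.
  rewrite (coboundary_ext (a := c) (b := fun u => (a u - coboundary x0 u) - r u));
    last by move=> u; rewrite /r opprB addrC subrK.
  rewrite coboundaryB coboundaryB dd0 subr0.
  apply: sg_sub; first exact: subsum_sg.
    exact: Ha.
  apply: subsum_cob => // j; apply: Hr; exact: face_in.
have [y [HyS Hy]] := IHN T' HT' S' (S p) (HS p) HS' (dist_cap (p:=p) Hdist)
  (fun k x _ Hx => Hx.1) n c HcS Hcoc.
exists (fun u => x0 u + y u); split.
  move=> u; apply: sg_add => //; first exact: HaB.
  exact: HTB (HyS u).
move=> i Hi; rewrite coboundaryD.
case: (boolP [forall k, i k \in T']) => HiT'.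
  have H1 := Hy i (fun k => forallP HiT' k).
  have H2 := Hr i Hi.
  have -> : coboundary x0 i + coboundary y i - a i =
    (coboundary y i - c i) - r i by rewrite /r; apply: l1.
  apply: sg_sub; first exact: subsum_sg.
    exact: (subsum_mono (fun k x (H : S' k x) => H.2) H1).
  exact: H2.
move: HiT'; rewrite negb_forall => /existsP [k Hk].
have Eik : i k = p.
  by move: Hk; rewrite in_setD1 Hi andbT negbK => /eqP.
have HpS : forall z, S p z -> subsum S i z.
  by move=> z Hz; apply: (@subsum_mem A I S HS _ i k z); rewrite Eik.
have -> : coboundary x0 i + coboundary y i - a i =
    coboundary y i - (a i - coboundary x0 i) by apply: l2.
apply: sg_sub; first exact: subsum_sg.
  by apply: HpS; exact: sum_in_sg.
rewrite -coboundary_consf.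
have := Ha (consf p i) (consf_in Hp Hi).
move=> /(subsum_uncons) [u [v [Hu [Hv ->]]]].
apply: sg_add; first exact: subsum_sg.
  by apply: HpS; rewrite consf0 in Hu.
by rewrite face0_consf in Hv.
Qed.

Theorem theorem4 (A : zmodType) (I : finType) (S : I -> A -> Prop)
  (HS : forall i, is_subgroup (S i))
  (Hdist : distributive_gen S)
  (n : nat) (Hn : (0 < n)%N)
  (a : {ffun 'I_n.+1 -> I} -> A)
  (Ha : forall i : {ffun 'I_n.+2 -> I}, subsum S i (coboundary a i)) :
  exists x : {ffun 'I_n -> I} -> A,
    forall i : {ffun 'I_n.+1 -> I}, subsum S i (coboundary x i - a i).
Proof.
have HB : is_subgroup (fun _ : A => True) by [].
have [x [_ Hx]] := @main_lemma A I #|[set: I]| [set: I] (leqnn _) S (fun _ => True)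
  HB HS Hdist (fun _ _ _ _ => Logic.I) n a (fun _ => Logic.I) (fun i _ => Ha i).
by exists x => i; apply: Hx => k; rewrite in_setT.
Qed.
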